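(* Let $\Lambda$ be a cohomology algebra of $b^+=1$ type. Then the subgroup $I_T\subseteq\Lambda^2$ generated by all products $xy$ with $x,y\in\Lambda^1$ has rank at most $1$, and $\tilde b_1(\Lambda)$ is even.
   Context: A cohomology algebra is a graded, commutative, associative algebra $\Lambda=\bigoplus_{i=0}^4\Lambda^i$ over $\Lambda^0=\mathbb{Z}$, each $\Lambda^i$ free abelian of finite rank $b_i(\Lambda)$, with an isomorphism $p:\Lambda^4\cong\mathbb{Z}$ such that each product pairing $\Lambda^i\times\Lambda^{4-i}\to\mathbb{Z}$ is perfect. $\Gamma(x,y)=p(xy)$ on $\Lambda^2$ is a unimodular symmetric form; $b^+=1$ type means $\Gamma$ has exactly one positive eigenvalue. $\ker T=\{x\in\Lambda^1: xy=0\ \forall y\in\Lambda^1\}$ and $\tilde b_1(\Lambda)=b_1(\Lambda)-\mathrm{rank}\ker T$ (the rank of the skew-symmetric product pairing $T:\Lambda^1\times\Lambda^1\to\Lambda^2$). *)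

(* Defs.v *)
From HB Require Import structures.
From mathcomp Require Import all_boot all_order all_algebra all_field.
Import Order.TTheory GRing.Theory Num.Theory.
Local Open Scope ring_scope.

(* We fix Z-bases, so
   Lambda^i = 'rV[int]_(b_i); Lambda^0 = Z (acting by scalar multiplication,
   1 the unit) and Lambda^4 = Z (i.e. the isomorphism p is the identity).
   The products of positive-degree pieces are recorded by
     mul11 : L1 x L1 -> L2,  mul12 : L1 x L2 -> L3,
     mul13 : L1 x L3 -> L4 = Z,  mul22 : L2 x L2 -> L4 = Z;
   the products in the remaining orders are determined by graded
   commutativity:  w x = x w (w in L2),  z x = - x z (z in L3). *)
Record coh_data := CohData {
  b1 : nat; b2 : nat; b3 : nat;
  mul11 : 'rV[int]_b1 -> 'rV[int]_b1 -> 'rV[int]_b2;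
  mul12 : 'rV[int]_b1 -> 'rV[int]_b2 -> 'rV[int]_b3;
  mul13 : 'rV[int]_b1 -> 'rV[int]_b3 -> int;
  mul22 : 'rV[int]_b2 -> 'rV[int]_b2 -> int }.

Set Implicit Arguments. Unset Strict Implicit. Unset Printing Implicit Defensive.

Definition biadditive (U V W : zmodType) (f : U -> V -> W) : Prop :=
  (forall x x' y, f (x + x') y = f x y + f x' y) /\
  (forall x y y', f x (y + y') = f x y + f x y').

Definition additive_fun (U W : zmodType) (f : U -> W) : Prop :=
  forall x x', f (x + x') = f x + f x'.

Definition perfect (m n : nat) (f : 'rV[int]_m -> 'rV[int]_n -> int) : Prop :=
  (forall phi : 'rV[int]_n -> int, additive_fun phi ->
     exists! x, forall y, f x y = phi y) /\
  (forall psi : 'rV[int]_m -> int, additive_fun psi ->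
     exists! y, forall x, f x y = psi x).

Definition is_cohomology_algebra (A : coh_data) : Prop :=
  [/\ biadditive (mul11 A), biadditive (mul12 A),
      biadditive (mul13 A) & biadditive (mul22 A)]
  /\
  (forall x y, mul11 A x y = - mul11 A y x) /\
  (forall w w', mul22 A w w' = mul22 A w' w) /\
  (* associativity, degrees (1,1,1), (1,1,2), (1,2,1), (2,1,1) *)
  (forall x y z, mul12 A z (mul11 A x y) = mul12 A x (mul11 A y z)) /\
  (forall x y w, mul22 A (mul11 A x y) w = mul13 A x (mul12 A y w)) /\
  (forall x w y, - mul13 A y (mul12 A x w) = mul13 A x (mul12 A y w)) /\
  (forall w x y, - mul13 A y (mul12 A x w) = mul22 A w (mul11 A x y)) /\
  (* Poincare duality: perfect pairings L1 x L3 and L2 x L2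
     (L0 x L4 = Z x Z -> Z is multiplication, automatically perfect) *)
  perfect (mul13 A) /\ perfect (mul22 A).

Definition ebasis (n : nat) (i : 'I_n) : 'rV[int]_n := delta_mx 0 i.

Definition int2rat (m n : nat) (M : 'M[int]_(m, n)) : 'M[rat]_(m, n) :=
  map_mx (fun z : int => z%:~R) M.

Definition Gamma (A : coh_data) : 'M[int]_(b2 A) :=
  \matrix_(i, j) mul22 A (ebasis i) (ebasis j).

Definition bplus_one (A : coh_data) : Prop :=
  exists lam : 'I_(b2 A) -> algC,
    char_poly (map_mx (fun z : int => z%:~R : algC) (Gamma A))
      = \prod_(i < b2 A) ('X - (lam i)%:P)
    /\ #|[pred i | 0 < lam i]| = 1%N.

(* rank of I_T = subgroup of L2 generated by all products x y, x, y in L1;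
   by bilinearity it is generated by the products of basis vectors, and
   its rank is the dimension of its rational span. *)
Definition rank_IT (A : coh_data) : nat :=
  \rank (\sum_(i < b1 A) \sum_(j < b1 A)
           <<int2rat (mul11 A (ebasis i) (ebasis j))>>)%MS.

(* ker T = { x in L1 | x y = 0 for all y in L1 }; its rank is the dimension
   of the rational kernel of x |-> (x e_j)_j. *)
Definition Tmat (A : coh_data) (j : 'I_(b1 A)) : 'M[int]_(b1 A, b2 A) :=
  \matrix_(i, k) mul11 A (ebasis i) (ebasis j) 0 k.

Definition rank_kerT (A : coh_data) : nat :=
  \rank (\bigcap_(j < b1 A) kermx (int2rat (Tmat j)))%MS.

Definition tilde_b1 (A : coh_data) : nat := (b1 A - rank_kerT A)%N.

(* Main.v *)
Require Import Defs.
From HB Require Import structures.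
From mathcomp Require Import all_boot all_order all_algebra all_field.
From mathcomp Require Import ring zify lra.
Import Order.TTheory GRing.Theory Num.Theory.
Set Implicit Arguments. Unset Strict Implicit. Unset Printing Implicit Defensive.
Local Open Scope ring_scope.

Lemma addf_0 (U W : zmodType) (f : U -> W) : additive_fun f -> f 0 = 0.
Proof. move=> H; have := H 0 0; rewrite addr0 -{1}[f 0]addr0 => /addrI; done. Qed.

Lemma addf_N (U W : zmodType) (f : U -> W) x : additive_fun f -> f (- x) = - f x.
Proof. move=> H; apply/eqP; rewrite -subr_eq0 opprK -H addNr (addf_0 H) //. Qed.

Lemma addf_natmul (U W : zmodType) (f : U -> W) x n : additive_fun f -> f (x *+ n) = f x *+ n.
Proof. move=> H; elim: n => [|n IH]; first by rewrite !mulr0n addf_0. by rewrite !mulrS H IH. Qed.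

Lemma addf_intmul (U W : zmodType) (f : U -> W) x k : additive_fun f -> f (x *~ k) = f x *~ k.
Proof. move=> H; case: k => n; first by rewrite /= addf_natmul.
by rewrite !NegzE !mulrNz addf_N // addf_natmul. Qed.

Lemma addf_sum (U W : zmodType) (f : U -> W) (I : finType) (F : I -> U) : additive_fun f ->
  f (\sum_i F i) = \sum_i f (F i).
Proof. move=> H; elim/big_rec2: _ => [|i y1 y2 _ <-]; by rewrite ?addf_0 // H. Qed.

Definition Q4 (A : coh_data) (x y z w : 'rV[int]_(b1 A)) : int :=
  mul22 A (mul11 A x y) (mul11 A z w).
Arguments Q4 : clear implicits.

Lemma m11_addl A (H : is_cohomology_algebra A) y : additive_fun (mul11 A ^~ y).
Proof. by move: H => [[[h _] _ _ _] _] x x' /=; exact: h. Qed.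
Lemma m11_addr A (H : is_cohomology_algebra A) x : additive_fun (mul11 A x).
Proof. by move: H => [[[_ h] _ _ _] _] y y' /=; exact: h. Qed.
Lemma m22_addl A (H : is_cohomology_algebra A) y : additive_fun (mul22 A ^~ y).
Proof. by move: H => [[_ _ _ [h _]] _] x x' /=; exact: h. Qed.
Lemma m22_addr A (H : is_cohomology_algebra A) x : additive_fun (mul22 A x).
Proof. by move: H => [[_ _ _ [_ h]] _] y y' /=; exact: h. Qed.
Lemma m11_anti A (H : is_cohomology_algebra A) x y : mul11 A x y = - mul11 A y x.
Proof. by case: H => _ [h _]. Qed.
Lemma m22_sym A (H : is_cohomology_algebra A) x y : mul22 A x y = mul22 A y x.
Proof. by case: H => _ [_ [h _]]. Qed.
Lemma assoc111 A (H : is_cohomology_algebra A) x y z :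
  mul12 A z (mul11 A x y) = mul12 A x (mul11 A y z).
Proof. by case: H => _ [_ [_ [h _]]]. Qed.
Lemma assoc112 A (H : is_cohomology_algebra A) x y w :
  mul22 A (mul11 A x y) w = mul13 A x (mul12 A y w).
Proof. by case: H => _ [_ [_ [_ [h _]]]]. Qed.


Lemma m22_Nl A (H : is_cohomology_algebra A) x y : mul22 A (- x) y = - mul22 A x y.
Proof. exact: (addf_N x (m22_addl H y)). Qed.
Lemma m22_Nr A (H : is_cohomology_algebra A) x y : mul22 A x (- y) = - mul22 A x y.
Proof. exact: (addf_N y (m22_addr H x)). Qed.
Lemma m22_0l A (H : is_cohomology_algebra A) y : mul22 A 0 y = 0.
Proof. exact: (addf_0 (m22_addl H y)). Qed.
Lemma m22_Dl A (H : is_cohomology_algebra A) x x' y : mul22 A (x + x') y = mul22 A x y + mul22 A x' y.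
Proof. exact: (m22_addl H y). Qed.
Lemma m22_Dr A (H : is_cohomology_algebra A) x y y' : mul22 A x (y + y') = mul22 A x y + mul22 A x y'.
Proof. exact: (m22_addr H x). Qed.
Lemma m22_zl A (H : is_cohomology_algebra A) x k y : mul22 A (x *~ k) y = mul22 A x y * k.
Proof. by rewrite -mulrzz; exact: (addf_intmul x k (m22_addl H y)). Qed.
Lemma m22_zr A (H : is_cohomology_algebra A) x k y : mul22 A x (y *~ k) = mul22 A x y * k.
Proof. by rewrite -mulrzz; exact: (addf_intmul y k (m22_addr H x)). Qed.

Lemma m11_diag A (H : is_cohomology_algebra A) x : mul11 A x x = 0.
Proof.
have := m11_anti H x x => /eqP; rewrite -subr_eq0 opprK => /eqP h.
apply/matrixP => i j; have := congr1 (fun m : 'rV[int]_(b2 A) => m i j) h; rewrite !mxE => /eqP.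
by rewrite -mulr2n -mulr_natr mulf_eq0 pnatr_eq0 orbF => /eqP ->.
Qed.

Lemma Q4_12 A (H : is_cohomology_algebra A) x y z w : Q4 A x y z w = - Q4 A y x z w.
Proof. by rewrite /Q4 (m11_anti H x) m22_Nl. Qed.
Lemma Q4_34 A (H : is_cohomology_algebra A) x y z w : Q4 A x y z w = - Q4 A x y w z.
Proof. by rewrite /Q4 (m11_anti H z) m22_Nr. Qed.
Lemma Q4_sw A (H : is_cohomology_algebra A) x y z w : Q4 A x y z w = Q4 A z w x y.
Proof. by rewrite /Q4 m22_sym. Qed.
Lemma Q4_23 A (H : is_cohomology_algebra A) x y z w : Q4 A x y z w = - Q4 A x z y w.
Proof.
rewrite /Q4 assoc112 // (assoc111 H z w y) -(assoc112 H).
by rewrite (m11_anti H w) m22_Nr.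
Qed.
Lemma Q4_aa A (H : is_cohomology_algebra A) x z w : Q4 A x x z w = 0.
Proof. by rewrite /Q4 m11_diag // m22_0l. Qed.
Lemma Q4_aba A (H : is_cohomology_algebra A) x y z : Q4 A x y x z = 0.
Proof. by rewrite Q4_23 // Q4_aa // oppr0. Qed.
Lemma Q4_abb A (H : is_cohomology_algebra A) x y z : Q4 A x y y z = 0.
Proof. by rewrite Q4_12 // Q4_23 // Q4_aa // !oppr0. Qed.

Lemma Q4_zero A (H : is_cohomology_algebra A)
  (key : forall p q : 'rV[int]_(b2 A), mul22 A p q = 0 -> 0 < mul22 A p p -> 0 < mul22 A q q -> False)
  x y z w : Q4 A x y z w = 0.
Proof.
set c := Q4 A x y z w.
apply/eqP; apply/negPn/negP => hc.
pose p := mul11 A x y + mul11 A z w *~ c.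
pose q := mul11 A x z + mul11 A y w *~ (- c).
apply: (key p q); rewrite /p /q !(m22_Dl H, m22_Dr H, m22_zl H, m22_zr H).
- have e1 := Q4_aba H x y z; have e2 := Q4_abb H x y w.
  have e3 : Q4 A z w x z = 0 by rewrite Q4_sw // Q4_abb.
  have e4 : Q4 A z w y w = 0 by rewrite Q4_sw // Q4_34 // Q4_abb // oppr0.
  rewrite /Q4 in e1 e2 e3 e4; rewrite e1 e2 e3 e4; ring.
- have e1 := Q4_aba H x y y; have e2 := Q4_aba H z w w.
  have e3 : Q4 A z w x y = c by rewrite Q4_sw.
  rewrite /Q4 in e1 e2 e3; rewrite e1 e2 e3 -/(Q4 A x y z w) -/c.
  have : 0 < c * c by rewrite lt0r mulf_eq0 orbb hc /= -expr2 sqr_ge0.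
  lia.
- have e1 := Q4_aba H x z z; have e2 := Q4_aba H y w w.
  have e3 : Q4 A y w x z = - c by rewrite Q4_sw // Q4_23.
  have e4 : Q4 A x z y w = - c by rewrite Q4_23 // opprK.
  rewrite /Q4 in e1 e2 e3 e4; rewrite e1 e2 e3 e4.
  have : 0 < c * c by rewrite lt0r mulf_eq0 orbb hc /= -expr2 sqr_ge0.
  lia.
Qed.

Lemma row_ebasis n (x : 'rV[int]_n) : x = \sum_i ebasis i *~ x 0 i.
Proof. by rewrite {1}(row_sum_delta x); apply: eq_bigr => i _; rewrite -scaler_int intz. Qed.

Lemma m22_expand A (H : is_cohomology_algebra A) x y :
  mul22 A x y = \sum_i \sum_j x 0 i * y 0 j * mul22 A (ebasis i) (ebasis j).
Proof.
rewrite {1}(row_ebasis x) (addf_sum _ (m22_addl H y)); apply: eq_bigr => i _.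
rewrite m22_zl // {1}(row_ebasis y) (addf_sum _ (m22_addr H _)) mulr_suml.
by apply: eq_bigr => j _; rewrite m22_zr //; ring.
Qed.

Definition Gm A : 'M[rat]_(b2 A) := int2rat (Gamma A).
Definition Bq n (M : 'M[rat]_n) (a b : 'rV[rat]_n) : rat := (a *m M *m b^T) 0 0.

Lemma Bq_int A (H : is_cohomology_algebra A) x y :
  Bq (Gm A) (int2rat x) (int2rat y) = (mul22 A x y)%:~R.
Proof.
rewrite m22_expand // rmorph_sum /=.
under [RHS]eq_bigr do rewrite rmorph_sum.
rewrite [RHS]exchange_big /Bq /Gm /int2rat !mxE /=.
apply: eq_bigr => j _; rewrite !mxE mulr_suml; apply: eq_bigr => i _.
by rewrite !mxE !rmorphM /=; ring.
Qed.

Lemma m22_mx A (H : is_cohomology_algebra A) x y :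
  mul22 A x y = (x *m Gamma A *m y^T) 0 0.
Proof.
rewrite m22_expand // exchange_big !mxE; apply: eq_bigr => j _; rewrite !mxE mulr_suml.
by apply: eq_bigr => i _; rewrite !mxE; ring.
Qed.

Lemma Gm_sym A (H : is_cohomology_algebra A) : (Gm A)^T = Gm A.
Proof. by apply/matrixP => i j; rewrite !mxE (m22_sym H). Qed.

Lemma Bq_sym A (H : is_cohomology_algebra A) a b : Bq (Gm A) a b = Bq (Gm A) b a.
Proof.
have e : forall (B : 'M[rat]_1), B 0 0 = B^T 0 0 by move=> B; rewrite mxE.
by rewrite /Bq e !trmx_mul trmxK Gm_sym // mulmxA.
Qed.

Lemma Gm_unit A (H : is_cohomology_algebra A) : Gm A \in unitmx.
Proof.
have perf : perfect (mul22 A) by case: H => _ [_ [_ [_ [_ [_ [_ [_ h]]]]]]].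
have : forall j : 'I_(b2 A), exists x : 'rV[int]_(b2 A), forall y, mul22 A x y = y 0 j.
  move=> j; have add : additive_fun (fun y : 'rV[int]_(b2 A) => y 0 j) by move=> y y'; rewrite mxE.
  have [x [hx _]] := perf.1 _ add.
  by exists x.
case/fin_all_exists => X hX.
pose M : 'M[int]_(b2 A) := \matrix_(j, k) X j 0 k.
have hM : M *m Gamma A = 1%:M.
  apply/matrixP => j k; have := hX j (ebasis k); rewrite m22_mx //.
  have e : (M *m Gamma A) j k = (row j (M *m Gamma A)) 0 k by rewrite [RHS]mxE.
  rewrite e.
  rewrite row_mul rowK /ebasis trmx_delta -colE !mxE => ->.
  by rewrite eq_sym.
have := congr1 (@int2rat _ _) hM; rewrite /int2rat map_mxM map_mx1 => /mulmx1_unit.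
by case.
Qed.

Definition Hf n (d a b : 'rV[algC]_n) : algC := \sum_i a 0 i * d 0 i * (b 0 i)^*.

Lemma Hf_le0 n (d c : 'rV[algC]_n) k :
  (forall i, i != k -> d 0 i <= 0) -> c 0 k = 0 -> Hf d c c <= 0.
Proof.
move=> hd ck; apply: sumr_le0 => i _.
case: (eqVneq i k) => [ik|ik].
  by rewrite ik ck !mul0r.
rewrite mulrAC; apply: mulr_ge0_le0; [exact: mul_conjC_ge0 | exact: hd].
Qed.

Lemma core2 n (d a b : 'rV[algC]_n) k :
  (forall i, i != k -> d 0 i <= 0) ->
  0 < Hf d a a -> 0 < Hf d b b -> Hf d a b = 0 -> Hf d b a = 0 -> False.
Proof.
move=> hd Ha Hb Hab Hba.
have [ak0|akn0] := eqVneq (a 0 k) 0.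
  by move: (lt_le_trans Ha (Hf_le0 hd ak0)); rewrite ltxx.
pose al := a 0 k; pose be := b 0 k.
pose c := be *: a - al *: b.
have ck : c 0 k = 0 by rewrite !mxE /al /be; ring.
have := Hf_le0 hd ck.
have -> : Hf d c c = be * be^* * Hf d a a - be * al^* * Hf d a b
                     - al * be^* * Hf d b a + al * al^* * Hf d b b.
  rewrite /Hf !mulr_sumr -!sumrB -big_split /=; apply: eq_bigr => i _.
  rewrite !mxE !(rmorphB, rmorphM) /=; ring.
rewrite Hab Hba !mulr0 !subr0 => h.
suff POS : 0 < be * be^* * Hf d a a + al * al^* * Hf d b b by move: (lt_le_trans POS h); rewrite ltxx.
apply: ltr_wpDl; first by rewrite mulr_ge0 ?mul_conjC_ge0 ?ltW.
by rewrite mulr_gt0 // mul_conjC_gt0.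
Qed.

Lemma card_count (T : finType) (P : pred T) : #|P| = count P (index_enum T).
Proof.
by rewrite cardE [index_enum T]unlock -size_filter; congr size.
Qed.

Lemma char_poly_simil (R : comUnitRingType) n (P D : 'M[R]_n) :
  P \in unitmx -> char_poly (invmx P *m D *m P) = char_poly D.
Proof.
move=> Pu; rewrite /char_poly /char_poly_mx.
have e : 'X%:M = map_mx polyC (invmx P) *m 'X%:M *m map_mx polyC P :> 'M[{poly R}]_n.
  by rewrite mul_mx_scalar -scalemxAl -map_mxM mulVmx // map_mx1 scalemx1.
rewrite [in LHS]e !map_mxM -mulmxBl -mulmxBr !det_mulmx mulrC mulrA.
by rewrite -det_mulmx -map_mxM mulmxV // map_mx1 det1 mul1r.
Qed.

Local Open Scope sesquilinear_scope.

Lemma Hf_mx n (d a b : 'rV[algC]_n) : (a *m diag_mx d *m b^t*) 0 0 = Hf d a b.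
Proof. rewrite mul_mx_diag /Hf !mxE; apply: eq_bigr => i _; rewrite !mxE. reflexivity.
Qed.

Lemma spectral_core n (G : 'M[algC]_n) (lam : 'I_n -> algC) :
  G \is hermsymmx -> char_poly G = \prod_(i < n) ('X - (lam i)%:P) ->
  #|[pred i | 0 < lam i]| = 1%N ->
  forall a b : 'rV_n, 0 < (a *m G *m a^t*) 0 0 -> 0 < (b *m G *m b^t*) 0 0 ->
  (a *m G *m b^t*) 0 0 = 0 -> (b *m G *m a^t*) 0 0 = 0 -> False.
Proof.
move=> HG Hc Hl a b.
have /orthomx_spectralP EG := hermitian_normalmx HG.
set P := spectralmx G in EG; set d := spectral_diag G in EG.
have PU : P \is unitarymx := spectral_unitarymx G.
have dreal : d \is a realmx := hermitian_spectral_diag_real HG.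
have Hcd : char_poly G = \prod_(i < n) ('X - (d 0 i)%:P).
  rewrite EG char_poly_simil ?spectral_unit // char_poly_trig ?diag_mx_is_trig //.
  by apply: eq_bigr => i _; rewrite !mxE eqxx mulr1n.
have pe : perm_eq [seq d 0 i | i <- index_enum 'I_n] [seq lam i | i <- index_enum 'I_n].
  apply: prod_XsubC_eq; rewrite !big_map.
  by rewrite -Hc -Hcd.
have cd : #|[pred i | 0 < d 0 i]| = 1%N.
  transitivity #|[pred i | 0 < lam i]|; last exact: Hl.
  rewrite !card_count.
  by move/permP: pe => /(_ (fun x : algC => 0 < x)); rewrite !count_map.
have /card1P [k hk] : #|[pred i | 0 < d 0 i]| == 1%N by rewrite cd.
have hd : forall i, i != k -> d 0 i <= 0.
  move=> i ik; have := hk i; rewrite !inE (negbTE ik) /= => h.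
  have ri : d 0 i \is Num.real by apply: (mxOverP dreal).
  by rewrite real_leNgt ?h ?real0.
have tr : forall x y : 'rV_n, (x *m G *m y^t*) 0 0 = Hf d (x *m P^t*) (y *m P^t*).
  move=> x y; rewrite -Hf_mx EG invmx_unitary //.
  rewrite trmx_mul map_mxM trmxCK !mulmxA //.
rewrite !tr => h1 h2 h3 h4.
exact: (core2 hd h1 h2 h3 h4).
Qed.

Local Open Scope sesquilinear_scope.

Lemma key_rat A (H : is_cohomology_algebra A) (Hb : bplus_one A) (p q : 'rV[rat]_(b2 A)) :
  Bq (Gm A) p q = 0 -> 0 < Bq (Gm A) p p -> 0 < Bq (Gm A) q q -> False.
Proof.
move=> hpq hp hq.
case: Hb => lam [Hc Hl].
set Gc := map_mx (fun z : int => z%:~R : algC) (Gamma A) in Hc.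
have HG : Gc \is hermsymmx.
  apply: realsym_hermsym.
    apply/is_hermitianmxP; rewrite expr0 scale1r.
    by apply/matrixP => i j; rewrite !mxE (m22_sym H).
  by apply/mxOverP => i j; rewrite mxE realz.
have eG : Gc = map_mx ratr (Gm A).
  by apply/matrixP => i j; rewrite !mxE ratr_int.
have tr : forall x y : 'rV[rat]_(b2 A),
    ((map_mx ratr x) *m Gc *m (map_mx ratr y)^t*) 0 0 = ratr (Bq (Gm A) x y).
  move=> x y; have -> : (map_mx ratr y)^t* = map_mx (@ratr algC) y^T.
    by apply/matrixP => i j; rewrite !mxE fmorph_rat.
  by rewrite eG -!map_mxM mxE.
apply: (spectral_core HG Hc Hl (a := map_mx ratr p) (b := map_mx ratr q)).
- by rewrite tr ltr0q.
- by rewrite tr ltr0q.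
- by rewrite tr hpq rmorph0.
- by rewrite tr Bq_sym // hpq rmorph0.
Qed.

Close Scope sesquilinear_scope.

Lemma BqDl n (M : 'M[rat]_n) a b c : Bq M (a + b) c = Bq M a c + Bq M b c.
Proof. by rewrite /Bq !mulmxDl mxE. Qed.
Lemma BqDr n (M : 'M[rat]_n) a b c : Bq M c (a + b) = Bq M c a + Bq M c b.
Proof. by rewrite /Bq linearD /= mulmxDr mxE. Qed.
Lemma BqZl n (M : 'M[rat]_n) k a c : Bq M (k *: a) c = k * Bq M a c.
Proof. by rewrite /Bq -!scalemxAl mxE. Qed.
Lemma BqZr n (M : 'M[rat]_n) k a c : Bq M c (k *: a) = k * Bq M c a.
Proof. by rewrite /Bq linearZ /= -scalemxAr mxE. Qed.
Lemma Bq_row n m p (M : 'M[rat]_n) (X : 'M_(m, n)) (Y : 'M_(p, n)) i j :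
  Bq M (row i X) (row j Y) = (X *m M *m Y^T) i j.
Proof.
rewrite /Bq -row_mul tr_row !mxE; apply: eq_bigr => k _; rewrite !mxE //.
Qed.

Lemma iso_rank A (H : is_cohomology_algebra A) (Hb : bplus_one A) m
  (S : 'M[rat]_(m, b2 A)) : S *m Gm A *m S^T = 0 -> (\rank S <= 1)%N.
Proof.
move=> hS; rewrite leqNgt; apply/negP => r2.
set G := Gm A.
have r0 : (0 < \rank S)%N by apply: leq_trans r2.
pose U := row_base S.
have [X eU] : exists X, U = X *m S by apply/submxP; rewrite eq_row_base.
have hU : U *m G *m U^T = 0.
  rewrite eU trmx_mul; transitivity (X *m (S *m G *m S^T) *m X^T); first by rewrite !mulmxA.
  by rewrite hS mulmx0 mul0mx.
have Gf : row_free G by rewrite row_free_unit Gm_unit.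
have rf : row_full (U *m G)^T.
  by rewrite /row_full mxrank_tr mxrankMfree // eqn_leq rank_leq_row /= eq_row_base.
have /row_fullP [W hW] := rf.
have hW' : W *m G *m U^T = 1%:M by rewrite -hW [(U *m G)^T]trmx_mul /G Gm_sym // mulmxA.
pose i0 := Ordinal r0; pose i1 := Ordinal r2.
have uu : forall a b, Bq G (row a U) (row b U) = 0 by move=> a b; rewrite Bq_row hU mxE.
have wu : forall a b, Bq G (row a W) (row b U) = (a == b)%:R by move=> a b; rewrite Bq_row hW' mxE.
have uw : forall a b, Bq G (row a U) (row b W) = (b == a)%:R by move=> a b; rewrite Bq_sym // wu.
have i01 : (i0 == i1) = false by [].
have i10 : (i1 == i0) = false by [].
set u0 := row i0 U; set u1 := row i1 U; set w0 := row i0 W; set w1 := row i1 W.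
pose t1 := (1 - Bq G w0 w0) / 2; pose t2 := (1 - Bq G w1 w1) / 2.
pose c := - Bq G w0 w1.
have s01 : Bq G w1 w0 = Bq G w0 w1 by rewrite Bq_sym.
apply: (key_rat H Hb (p := w0 + t1 *: u0) (q := w1 + t2 *: u1 + c *: u0));
  rewrite !(BqDl, BqDr, BqZl, BqZr) !uu !wu !uw ?eqxx ?i01 ?i10 ?s01 /t1 /t2 /c -/G /=.
- ring.
- lra.
- lra.
Qed.

Lemma dot0 n (b : 'rV[rat]_n) : b *m b^T = 0 -> b = 0.
Proof.
move=> h; have : (b *m b^T) 0 0 == 0 by rewrite h mxE.
have pos : forall k : 'I_n, true -> 0 <= b 0 k * b^T k 0.
  by move=> k _; rewrite mxE -expr2 sqr_ge0.
rewrite mxE => /eqP /(psumr_eq0P pos) h2.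
apply/matrixP => i j; rewrite (ord1 i) mxE.
have /eqP : b 0 j * b^T j 0 = 0 by apply: h2.
by rewrite mxE -expr2 sqrf_eq0 => /eqP.
Qed.

Lemma skew_even n (O : 'M[rat]_n) : O^T = - O -> ~~ odd (\rank O).
Proof.
move=> hO.
pose P := row_base O.
pose M := P *m O *m P^T.
have hM : M^T = - M.
  by rewrite /M trmx_mul [(P *m O)^T]trmx_mul trmxK hO mulNmx mulmxN mulmxA.
have inj : forall c : 'rV_(\rank O), c *m M = 0 -> c = 0.
  move=> c hc; pose a := c *m P.
  have haO : a *m O *m P^T = 0 by rewrite /a -hc /M !mulmxA.
  pose b := a *m O.
  have bP : (b <= P)%MS by rewrite eq_row_base submxMl.
  have [d hd] := submxP bP.
  have hb : b = 0 by apply: dot0; rewrite {2}hd trmx_mul mulmxA haO mul0mx.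
  have aP : (a <= O)%MS by rewrite -(eq_row_base O) submxMl.
  have [e he] := submxP aP.
  have ha : a = 0.
    apply: dot0; rewrite {1}he -mulmxA.
    have -> : O *m a^T = - (a *m O)^T by rewrite [(a *m O)^T]trmx_mul hO mulNmx opprK.
    by rewrite -/b hb trmx0 oppr0 mulmx0.
  have := row_free_inj (row_base_free O) (_ : c *m P = 0 *m P).
  by apply; rewrite mul0mx.
apply/negP => odr.
have : \det M == 0.
  have e1 : \det M = \det (- M) by rewrite -hM det_tr.
  rewrite -scaleN1r detZ -signr_odd odr expr1 mulN1r in e1.
  have : 2 * \det M = 0 by rewrite mulr2n; lra.
  by move/eqP; rewrite mulf_eq0 pnatr_eq0 orFb.
case/det0P => c cn0 /inj c0; by rewrite c0 eqxx in cn0.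
Qed.

Definition Tq A (i j : 'I_(b1 A)) : 'rV[rat]_(b2 A) := int2rat (mul11 A (ebasis i) (ebasis j)).
Arguments Tq : clear implicits.
Definition Vq A : 'M[rat]_(b2 A) := (\sum_(i < b1 A) \sum_(j < b1 A) <<Tq A i j>>)%MS.

Lemma mx11_0 (R : nzRingType) (M : 'M[R]_1) : M 0 0 = 0 -> M = 0.
Proof. by move=> h; rewrite [M]mx11_scalar h; apply/matrixP => i j; rewrite !mxE mul0rn. Qed.

Lemma Tq_orth A (H : is_cohomology_algebra A) (Hb : bplus_one A) i j k l :
  Bq (Gm A) (Tq A i j) (Tq A k l) = 0.
Proof.
have key : forall p q : 'rV[int]_(b2 A), mul22 A p q = 0 -> 0 < mul22 A p p -> 0 < mul22 A q q -> False.
  move=> p q h1 h2 h3; apply: (key_rat H Hb (p := int2rat p) (q := int2rat q));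
  by rewrite Bq_int // ?h1 ?ltr0z.
have := Q4_zero H key (ebasis i) (ebasis j) (ebasis k) (ebasis l).
by rewrite /Tq Bq_int // /Q4 => ->.
Qed.

Lemma V_iso A (H : is_cohomology_algebra A) (Hb : bplus_one A) :
  Vq A *m Gm A *m (Vq A)^T = 0.
Proof.
have step : forall p (Z : 'M[rat]_(p, b2 A)), (forall k l, Tq A k l *m Gm A *m Z^T = 0) ->
    Vq A *m Gm A *m Z^T = 0.
  move=> p Z hZ; apply/eqP; rewrite -mulmxA; apply/eqP/sub_kermxP.
  apply/sumsmx_subP => i _; apply/sumsmx_subP => j _; rewrite genmxE.
  by apply/sub_kermxP; rewrite mulmxA hZ.
apply: (step) => k l.
have : (Tq A k l *m Gm A *m (Vq A)^T)^T = 0.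
  rewrite !trmx_mul trmxK Gm_sym // mulmxA step // => i j.
  by apply: mx11_0; rewrite -/(Bq (Gm A) (Tq A i j) (Tq A k l)) Tq_orth.
by move/(congr1 trmx); rewrite trmxK trmx0.
Qed.

Lemma rank_IT_le1 A (H : is_cohomology_algebra A) (Hb : bplus_one A) : (rank_IT A <= 1)%N.
Proof. exact: (iso_rank H Hb (V_iso H Hb)). Qed.

Lemma rank1_row (F : fieldType) m n (V : 'M[F]_(m, n)) : (\rank V <= 1)%N ->
  exists v : 'rV_n, (V <= v)%MS.
Proof.
case: (posnP (\rank V)) => [r0 _|r0 r1].
  by exists 0; move/eqP: r0; rewrite mxrank_eq0 => /eqP ->; rewrite sub0mx.
exists (row (Ordinal r0) (row_base V)).
rewrite -(eq_row_base V); apply/row_subP => i.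
have -> : i = Ordinal r0 by apply: val_inj => /=; have := ltn_ord i; lia.
exact: submx_refl.
Qed.

Lemma Tq_sub A i j : (Tq A i j <= Vq A)%MS.
Proof.
apply: (sumsmx_sup i) => //; apply: (sumsmx_sup j) => //; rewrite genmxE //.
Qed.

Lemma Tq_anti A (H : is_cohomology_algebra A) i j : Tq A j i = - Tq A i j.
Proof. by rewrite /Tq (m11_anti H) /int2rat map_mxN. Qed.

Lemma kerT_full A : (forall i j, Tq A i j = 0) -> rank_kerT A = b1 A.
Proof.
move=> h; apply/eqP; rewrite eqn_leq rank_leq_col /= -{1}(mxrank1 rat (b1 A)).
apply: mxrankS; apply/sub_bigcapmxP => j _; apply/sub_kermxP.
have -> : int2rat (Tmat j) = 0.
  apply/matrixP => i k; have := congr1 (fun M : 'rV[rat]_(b2 A) => M 0 k) (h i j).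
  by rewrite /Tq !mxE.
by rewrite mulmx0.
Qed.

Lemma kerT_rank A (H : is_cohomology_algebra A) (v : 'rV[rat]_(b2 A)) k :
  v 0 k != 0 -> (forall i j, (Tq A i j <= v)%MS) ->
  exists O : 'M[rat]_(b1 A), O^T = - O /\ rank_kerT A = (b1 A - \rank O)%N.
Proof.
move=> vk hv.
pose O : 'M[rat]_(b1 A) := \matrix_(i, j) (Tq A i j 0 k / v 0 k).
have hT : forall i j, Tq A i j = O i j *: v.
  move=> i j; have [D hD] := submxP (hv i j).
  have e : Tq A i j = D 0 0 *: v by rewrite hD {1}[D]mx11_scalar mul_scalar_mx.
  by rewrite {1}e; congr (_ *: _); rewrite mxE e mxE mulfK.
exists O; split.
  by apply/matrixP => i j; rewrite !mxE (m11_anti H) !mxE rmorphN mulNr.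
have hKM : forall p (K : 'M[rat]_(p, b1 A)) j,
    K *m int2rat (Tmat j) = col j (K *m O) *m v.
  move=> p K j; apply/matrixP => r l; rewrite !mxE big_ord1 !mxE mulr_suml.
  apply: eq_bigr => i _; rewrite !mxE.
  have := congr1 (fun M : 'rV[rat]_(b2 A) => M 0 l) (hT i j).
  by rewrite /Tq !mxE => ->; ring.
rewrite /rank_kerT -mxrank_ker; apply: eqmx_rank; apply/andP; split.
  apply/sub_kermxP; apply/matrixP => r j; rewrite mxE.
  set K := (\bigcap_(j0 < b1 A) _)%MS.
  have hj : K *m int2rat (Tmat j) = 0.
    by apply/sub_kermxP; apply: (bigcapmx_inf j).
  have := congr1 (fun M : 'M[rat]_(b1 A, b2 A) => M r k) hj.
  rewrite hKM !mxE big_ord1 !mxE => /eqP; rewrite mulf_eq0 (negbTE vk) orbF => /eqP.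
  by [].
apply/sub_bigcapmxP => j _; apply/sub_kermxP; rewrite hKM mulmx_ker.
have -> : col j (0 : 'M[rat]_(b1 A)) = 0 by apply/matrixP => ? ?; rewrite !mxE.
by rewrite mul0mx.
Qed.

Close Scope sesquilinear_scope.
Close Scope ring_scope.
Unset Implicit Arguments.

Theorem mainTheorem3 (A : coh_data) :
  is_cohomology_algebra A -> bplus_one A ->
  (rank_IT A <= 1)%N /\ ~~ odd (tilde_b1 A).
Proof.
move=> H Hb; split; first exact: rank_IT_le1.
have [v hv] := rank1_row (V := Vq A) (rank_IT_le1 H Hb).
have hT : forall i j, (Tq A i j <= v)%MS := fun i j => submx_trans (Tq_sub i j) hv.
case: (pickP (fun k => v 0 k != 0)%R) => [k vk | v0].
  have [O [hO hr]] := kerT_rank H vk hT.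
  by rewrite /tilde_b1 hr subKn ?rank_leq_row //; exact: skew_even.
have ev : v = 0%R.
  by apply/matrixP => i j; rewrite (ord1 i) mxE; move/negbFE/eqP: (v0 j).
rewrite /tilde_b1 kerT_full ?subnn //.
by move=> i j; apply: submx0null; move: (hT i j); rewrite ev; exact.
Qed.
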